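(* Let $G_1$ be the metric graph consisting of a loop of length $4$ (a single edge of length $4$ whose two endpoints are identified at a vertex $u$) together with one pendant edge of length $1$ attached at $u$ (so $u$ has degree $3$). Let $G_2$ be the metric graph with vertices $u,w$ joined by two parallel edges of length $1$, with one pendant edge of length $1$ attached at $u$ and two pendant edges of length $1$ attached at $w$ (so $u$ has degree $3$ and $w$ has degree $4$). Then $G_1$ and $G_2$ are isospectral with standard vertex conditions; in fact both have secular determinant $\Sigma(k)=\det(I-S_vS_e(k))=\frac13\left(e^{2ik}-1\right)^2\left(7e^{2ik}+7e^{4ik}+3e^{6ik}+3\right)$, where $S_v$ is the bond (vertex) scattering matrix with entries $2/d_v-1$ for reflection and $2/d_v$ for transmission at a vertex of degree $d_v$, and $S_e(k)$ is the diagonal matrix with entry $e^{ik\ell_b}$ on each directed bond $b$ of length $\ell_b$.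
   Context: On each edge the operator is $\mathbf{L}=-\frac{d^2}{dx^2}$ with standard (Neumann–Kirchhoff) vertex conditions: continuity at each vertex and vanishing sum of outward normal derivatives at each vertex. Eigenvalues are $\lambda=k^2$; two graphs are isospectral if they have the same eigenvalues with multiplicities. The nonzero eigenfrequencies $k>0$ (with multiplicity) are the zeros of the secular determinant $\det(I-S_vS_e(k))$. *)

(* Defs.v *)
From HB Require Import structures.
From mathcomp Require Import all_boot all_order all_algebra.
From mathcomp Require Import reals trigo.
From mathcomp Require Export complex.

Set Implicit Arguments.
Unset Strict Implicit.
Unset Printing Implicit Defensive.

Import Order.TTheory GRing.Theory Num.Theory.
Local Open Scope ring_scope.

Record qgraph (R : realType) := QGraph {
  qV : finType;
  qE : finType;
  qsrc : qE -> qV;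
  qtgt : qE -> qV;
  qlen : qE -> R }.

Section QuantumGraph.
Variables (R : realType) (G : qgraph R).

Definition bond : finType := (qE G * bool)%type.
Definition borig (b : bond) : qV G := if b.2 then qsrc b.1 else qtgt b.1.
Definition bterm (b : bond) : qV G := if b.2 then qtgt b.1 else qsrc b.1.
Definition brev (b : bond) : bond := (b.1, ~~ b.2).
Definition blen (b : bond) : R := qlen b.1.

(* degree of a vertex = number of bonds leaving it (a loop counts twice) *)
Definition qdeg (v : qV G) : nat := #|[set b : bond | borig b == v]|.

Definition expi (x : R) : R[i] := Complex (cos x) (sin x).

(* bond scattering matrix S_v, indexed by bonds: the entry (b', b) is the
   amplitude scattered from the incoming bond b into the outgoing bond b'
   at the vertex v = bterm b; it vanishes unless b' leaves v. *)
Definition Sv_entry (b' b : bond) : R[i] :=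
  if borig b' == bterm b then
    (((2%:R / (qdeg (bterm b))%:R - (b' == brev b)%:R : R))%:C)%C
  else 0.

Definition Se_entry (k : R) (b' b : bond) : R[i] :=
  if b' == b then expi (k * blen b) else 0.

Definition Sv_mx : 'M[R[i]]_#|bond| :=
  \matrix_(i, j) Sv_entry (enum_val i) (enum_val j).
Definition Se_mx (k : R) : 'M[R[i]]_#|bond| :=
  \matrix_(i, j) Se_entry k (enum_val i) (enum_val j).

Definition secular_det (k : R) : R[i] := \det (1%:M - Sv_mx *m Se_mx k).

End QuantumGraph.

(* G1: vertex u = 0, pendant end 1.  Edge 0 is the loop at u of length 4,
   edge 1 is the pendant edge u -- 1 of length 1. *)
Definition G1 (R : realType) : qgraph R :=
  @QGraph R 'I_2 'I_2
    (fun _ => ord0)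
    (fun e => if val e == 0%N then ord0 else ord_max)
    (fun e => if val e == 0%N then 4%:R else 1).

(* G2: vertices u = 0, w = 1, pendant ends 2, 3, 4.  Edges (all of length 1):
   0 : u -- w, 1 : u -- w, 2 : u -- 2, 3 : w -- 3, 4 : w -- 4. *)
Definition G2_src (e : 'I_5) : 'I_5 :=
  if (val e <= 2)%N then inord 0 else inord 1.
Definition G2_tgt (e : 'I_5) : 'I_5 :=
  if (val e <= 1)%N then inord 1 else e.
Definition G2 (R : realType) : qgraph R :=
  @QGraph R 'I_5 'I_5 G2_src G2_tgt (fun _ => 1).

Definition Sigma (R : realType) (k : R) : R[i] :=
  3%:R^-1 * (expi (2%:R * k) - 1) ^+ 2 *
  (7%:R * expi (2%:R * k) + 7%:R * expi (4%:R * k)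
   + 3%:R * expi (6%:R * k) + 3%:R).

(* Main.v *)
Require Import Defs.
From HB Require Import structures.
From mathcomp Require Import all_boot all_order all_algebra.
From mathcomp Require Import reals trigo complex.
From mathcomp Require Import ssrZ ring.
From Stdlib Require Import BinNums BinInt.
Import GRing.Theory Num.Theory.
Local Open Scope ring_scope.

Fixpoint padd (p q : seq Z) : seq Z :=
  match p, q with
  | [::], _ => q
  | _, [::] => p
  | a :: p', b :: q' => BinInt.Z.add a b :: padd p' q'
  end.
Definition pscale (c : Z) (p : seq Z) : seq Z := map (BinInt.Z.mul c) p.
Fixpoint pmul (p q : seq Z) : seq Z :=
  if p is c :: p' then padd (pscale c q) (BinNums.Z0 :: pmul p' q) else [::].
Definition pneg := pscale (BinNums.Zneg xH).
Definition mono (l : nat) (c : Z) : seq Z := ncons l BinNums.Z0 [:: c].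

Section Eval.
Variables (F : comNzRingType) (z : F).
Definition zR (c : Z) : F := (int_of_Z c)%:~R.
Lemma zRD a b : zR (BinInt.Z.add a b) = zR a + zR b.
Proof. by rewrite /zR -intrD; congr (_%:~R); exact: (raddfD int_of_Z a b). Qed.
Lemma zRB a b : zR (BinInt.Z.sub a b) = zR a - zR b.
Proof. by rewrite /zR -intrB; congr (_%:~R); exact: (raddfB int_of_Z a b). Qed.
Lemma zRM a b : zR (BinInt.Z.mul a b) = zR a * zR b.
Proof. by rewrite /zR -intrM; congr (_%:~R); exact: (rmorphM int_of_Z a b). Qed.
Lemma zR0 : zR BinNums.Z0 = 0. Proof. by []. Qed.
Lemma zR1 : zR (BinNums.Zpos xH) = 1. Proof. by []. Qed.
Lemma zRm1 : zR (BinNums.Zneg xH) = -1. Proof. by []. Qed.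
Lemma zR2 : zR (Zpos (xO xH)) = 2%:R. Proof. by []. Qed.
Lemma zRm2 : zR (Zneg (xO xH)) = - 2%:R. Proof. by []. Qed.
Lemma zR_nat n : zR (BinInt.Z.of_nat n) = n%:R.
Proof. by rewrite /zR -[BinInt.Z.of_nat n]/(Z_of_int n) Z_of_intK. Qed.

Fixpoint peval (p : seq Z) : F := if p is c :: q then zR c + z * peval q else 0.

Lemma pevalD p q : peval (padd p q) = peval p + peval q.
Proof.
elim: p q => [|a p IH] [|b q] /=; rewrite ?add0r ?addr0 //.
by rewrite zRD IH; ring.
Qed.
Lemma pevalZ c p : peval (pscale c p) = zR c * peval p.
Proof.
elim: p => [|a p IH] /=; first by rewrite mulr0.
by rewrite zRM IH; ring.
Qed.
Lemma pevalM p q : peval (pmul p q) = peval p * peval q.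
Proof.
elim: p => [|a p IH] /=; first by rewrite mul0r.
by rewrite pevalD pevalZ /= zR0 IH; ring.
Qed.
Lemma pevalN p : peval (pneg p) = - peval p.
Proof. by rewrite pevalZ zRm1 mulN1r. Qed.
Lemma peval_mono l c : peval (mono l c) = zR c * z ^+ l.
Proof.
elim: l => [|l IH] /=; first by rewrite mulr0 addr0 expr0 mulr1.
by rewrite zR0 IH exprS; ring.
Qed.

Definition minor (A : nat -> nat -> seq Z) (j : nat) : nat -> nat -> seq Z :=
  fun i' j' => A i'.+1 (bump j j').
Definition lterm (a : seq Z) (j : nat) (L : unit -> seq Z) : seq Z :=
  if a is [::] then [::] else pmul (if odd j then pneg a else a) (L tt).
Fixpoint lap (n : nat) (A : nat -> nat -> seq Z) {struct n} : seq Z :=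
  match n with
  | 0 => [:: BinNums.Zpos xH]
  | m.+1 => foldr padd [::]
       [seq lterm (A 0%nat j) j (fun _ => lap m (minor A j)) | j <- iota 0 m.+1]
  end.

Lemma peval_lterm a j L : peval (lterm a j L) = (-1) ^+ j * peval a * peval (L tt).
Proof.
case: a => [|c a]; first by rewrite /= mulr0 mul0r.
change (peval (pmul (if odd j then pneg (c :: a) else (c :: a)) (L tt)) = (-1) ^+ j * peval (c :: a) * peval (L tt)).
rewrite pevalM -signr_odd; case: (odd j); rewrite ?pevalN; ring.
Qed.

Lemma peval_foldr (f : nat -> seq Z) s :
  peval (foldr padd [::] (map f s)) = \sum_(j <- s) peval (f j).
Proof.
elim: s => [|a s IH] /=; first by rewrite big_nil.
by rewrite big_cons pevalD IH.
Qed.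

Lemma lapE n A : peval (lap n A) = \det (\matrix_(i, j < n) peval (A i j)).
Proof.
elim: n A => [|n IH] A.
  by rewrite det_mx00 /= zR1 mulr0 addr0.
rewrite (expand_det_row _ ord0).
rewrite -[lap n.+1 A]/(foldr padd [::] [seq lterm (A 0%nat j) j (fun _ => lap n (minor A j)) | j <- iota 0 n.+1]) peval_foldr.
have -> : iota 0 n.+1 = index_iota 0 n.+1 by rewrite /index_iota subn0.
rewrite big_mkord; apply: eq_bigr => j _.
rewrite peval_lterm /cofactor mxE add0n IH.
have -> : row' ord0 (col' j (\matrix_(i, j0 < n.+1) peval (A i j0)))
   = \matrix_(i, j' < n) peval (minor A j i j').
  by apply/matrixP => i' j'; rewrite !mxE lift0.
by rewrite mulrA [peval _ * _]mulrC.
Qed.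
End Eval.
Arguments peval {F} z p.
Arguments zR {F} c.

Section Expi.
Variable R : realType.
Lemma expiD (x y : R) : expi (x + y) = expi x * expi y.
Proof.
rewrite /expi cosD sinD.
apply/eqP; rewrite eq_complex /=; apply/andP; split; apply/eqP; ring.
Qed.
Lemma expi0 : expi (0 : R) = 1.
Proof. by rewrite /expi cos0 sin0. Qed.
Lemma expiMn (x : R) n : expi (x * n%:R) = expi x ^+ n.
Proof.
elim: n => [|n IH]; first by rewrite mulr0 expi0 expr0.
by rewrite -natr1 mulrDr mulr1 expiD IH exprSr.
Qed.
Lemma expinM (x : R) n : expi (n%:R * x) = expi x ^+ n.
Proof. by rewrite mulrC expiMn. Qed.
End Expi.

Section Comp.
Variables (srcN tgtN lenN : nat -> nat) (bondsN : seq (nat * bool)).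
Definition origN (k : nat * bool) : nat := if k.2 then srcN k.1 else tgtN k.1.
Definition termN (k : nat * bool) : nat := if k.2 then tgtN k.1 else srcN k.1.
Definition degN (v : nat) : nat := count (fun k => origN k == v) bondsN.
Definition Fz (k' k : nat * bool) : seq Z :=
  let d := degN (origN k') in
  padd (if k' == k then [:: Z.of_nat d] else [::])
       (if origN k' == termN k then
          mono (lenN k.1) (if k' == (k.1, ~~ k.2) then Z.sub (Z.of_nat d) (Zpos (xO xH))
                           else Zneg (xO xH))
        else [::]).
Definition Az (i j : nat) : seq Z :=
  Fz (nth (0%nat, true) bondsN i) (nth (0%nat, true) bondsN j).
Definition Pn : nat := foldr (fun k a => (degN (origN k) * a)%nat) 1%nat bondsN.
Definition lapG : seq Z := lap (size bondsN) Az.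
End Comp.

Section Graph.
Variables (R : realType) (G : qgraph R) (kE : qE G -> nat) (kV : qV G -> nat).
Hypotheses (kE_inj : injective kE) (kV_inj : injective kV).
Variables (srcN tgtN lenN : nat -> nat) (bondsN : seq (nat * bool)).
Hypotheses (Hs : forall e, kV (qsrc e) = srcN (kE e))
           (Ht : forall e, kV (qtgt e) = tgtN (kE e))
           (Hl : forall e, qlen e = (lenN (kE e))%:R).
Definition key (b : bond G) : nat * bool := (kE b.1, b.2).
Hypothesis HbN : map key (enum (bond G)) = bondsN.

Lemma key_inj : injective key.
Proof. by move=> [e1 d1] [e2 d2] [/kE_inj -> ->]. Qed.
Lemma origE b : kV (borig b) = origN srcN tgtN (key b).
Proof. by case: b => e [] /=; rewrite /borig /origN /=. Qed.
Lemma termE b : kV (bterm b) = termN srcN tgtN (key b).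
Proof. by case: b => e [] /=; rewrite /bterm /termN /=. Qed.

Lemma qdegE v : qdeg v = degN srcN tgtN bondsN (kV v).
Proof.
rewrite /qdeg /degN -HbN count_map cardsE cardE /enum_mem size_filter.
rewrite (_ : [seq x <- Finite.enum (bond G) | mem (bond G) x] = Finite.enum (bond G)); last by apply/all_filterP/allP.
apply: eq_count => b /=; rewrite -origE.
by rewrite (inj_eq kV_inj).
Qed.

Lemma entryE (k : R) (b' b : bond G) :
  (degN srcN tgtN bondsN (origN srcN tgtN (key b')))%:R *
    ((b' == b)%:R - Sv_entry b' b * expi (k * blen b))
  = peval (expi k) (Fz srcN tgtN lenN bondsN (key b') (key b)).
Proof.
rewrite /Fz pevalD (inj_eq key_inj) -origE -termE (inj_eq kV_inj).
rewrite -[((key b).1, ~~ (key b).2)]/(key (brev b)) (inj_eq key_inj).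
rewrite -qdegE /Sv_entry /blen Hl expiMn.
rewrite -[(key b).1]/(kE b.1).
case E: (borig b' == bterm b); last first.
  by case: (b' == b); rewrite /= ?mul0r ?subr0 ?mulr1 ?mulr0 ?zR_nat ?addr0 ?add0r.
have dpos : (qdeg (borig b'))%:R != 0 :> R.
  rewrite pnatr_eq0 -lt0n /qdeg card_gt0; apply/set0Pn; exists b'; by rewrite inE.
rewrite -(eqP E) peval_mono.
rewrite rmorphB /= fmorph_div /= !rmorph_nat.
set d := qdeg (borig b').
have dposC : (d%:R : R[i]) != 0 by rewrite -(rmorph_nat (real_complex R)) fmorph_eq0.
case: (b' == b); case: (b' == brev b);
  rewrite /= ?zR_nat ?zRB ?add0r ?addr0 ?mul0r ?mulr0;
  rewrite ?zR2 ?zRm2; field; exact: dposC.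
Qed.

Lemma prod_foldr (f : nat * bool -> nat) s :
  \prod_(k <- s) ((f k)%:R : R[i]) = (foldr (fun k a => (f k * a)%nat) 1%nat s)%:R.
Proof.
elim: s => [|a s IH]; first by rewrite big_nil.
by rewrite big_cons IH /= natrM.
Qed.

Lemma cardB : #|bond G| = size bondsN.
Proof. by rewrite cardT -HbN size_map. Qed.

Lemma Hn (i : 'I_#|bond G|) : nth (0%nat, true) bondsN i = key (enum_val i).
Proof.
rewrite -HbN (nth_map (enum_val i)); last by rewrite -cardT.
by rewrite -enum_val_nth.
Qed.

Lemma secE (k : R) :
  (Pn srcN tgtN bondsN)%:R * secular_det G k
  = peval (expi k) (lapG srcN tgtN lenN bondsN).
Proof.
rewrite /lapG -cardB lapE /secular_det.
set f := fun i : 'I_#|bond G| =>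
  ((degN srcN tgtN bondsN (origN srcN tgtN (key (enum_val i))))%:R : R[i]).
have -> : \matrix_(i, j < #|bond G|) peval (expi k) (Az srcN tgtN lenN bondsN i j)
   = diag_mx (\row_i f i) *m (1%:M - Sv_mx G *m Se_mx G k).
  apply/matrixP => i j; rewrite mul_diag_mx !mxE /Az !Hn -entryE.
  rewrite (bigD1 j) //= big1 ?addr0; last first.
    by move=> l /negbTE nl; rewrite !mxE /Se_entry (inj_eq enum_val_inj) nl mulr0.
  by rewrite !mxE /Se_entry eqxx (inj_eq enum_val_inj).
rewrite det_mulmx det_diag; congr (_ * _).
rewrite (eq_bigr (fun i => f i)); last by move=> i _; rewrite mxE.
rewrite /f -(big_enum_val (fun b => ((degN srcN tgtN bondsN (origN srcN tgtN (key b)))%:R : R[i]))).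
rewrite -big_enum.
rewrite -(big_map key xpredT (fun k => ((degN srcN tgtN bondsN (origN srcN tgtN k))%:R : R[i]))).
by rewrite HbN prod_foldr.
Qed.
End Graph.

Definition Lsig : seq Z := [:: Zpos (xI xH); Z0; Zpos xH; Z0; Zneg (xO (xO xH)); Z0;
   Zneg (xO (xO xH)); Z0; Zpos xH; Z0; Zpos (xI xH)].

Lemma pevalLsig (R : realType) (k : R) : peval (expi k) Lsig = 3%:R * Sigma k.
Proof.
have e3 : zR (Zpos (xI xH)) = 3%:R :> R[i] by [].
have em4 : zR (Zneg (xO (xO xH))) = - 4%:R :> R[i] by [].
rewrite /= e3 em4 zR1 zR0 /Sigma !expinM.
have h3 : (3%:R : R[i]) != 0 by rewrite pnatr_eq0.
by field.
Qed.

Lemma finish (R : realType) (G : qgraph R) (kE : qE G -> nat) (kV : qV G -> nat)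
  (kE_inj : injective kE) (kV_inj : injective kV)
  (srcN tgtN lenN : nat -> nat) (bondsN : seq (nat * bool))
  (Hs : forall e, kV (qsrc e) = srcN (kE e))
  (Ht : forall e, kV (qtgt e) = tgtN (kE e))
  (Hl : forall e, qlen e = (lenN (kE e))%:R)
  (HbN : map (@key R G kE) (enum (bond G)) = bondsN)
  (Hc : pscale (Zpos (xI xH)) (lapG srcN tgtN lenN bondsN)
        = pscale (Z.of_nat (Pn srcN tgtN bondsN)) Lsig)
  (HP : (0 < Pn srcN tgtN bondsN)%nat) :
  forall k : R, secular_det G k = Sigma k.
Proof.
move=> k.
have H := @secE R G kE kV kE_inj kV_inj srcN tgtN lenN bondsN Hs Ht Hl HbN k.
have hP : ((Pn srcN tgtN bondsN)%:R * 3%:R : R[i]) != 0.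
  by rewrite mulf_eq0 !pnatr_eq0 negb_or -lt0n HP.
apply: (mulfI hP).
rewrite mulrAC H -[3%:R]/(zR (Zpos (xI xH)) : R[i]) mulrC -pevalZ Hc pevalZ zR_nat.
by rewrite pevalLsig mulrA.
Qed.

Definition src1 (e : nat) : nat := 0%nat.
Definition tgt1 (e : nat) : nat := if e == 0%nat then 0%nat else 1%nat.
Definition len1 (e : nat) : nat := if e == 0%nat then 4%nat else 1%nat.
Definition bonds1 : seq (nat * bool) := [seq (i, b) | i <- iota 0 2, b <- [:: true; false]].
Definition src2 (e : nat) : nat := if leq e 2 then 0%nat else 1%nat.
Definition tgt2 (e : nat) : nat := if leq e 1 then 1%nat else e.
Definition len2 (e : nat) : nat := 1%nat.
Definition bonds2 : seq (nat * bool) := [seq (i, b) | i <- iota 0 5, b <- [:: true; false]].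

Lemma G1_ok (R : realType) (k : R) : secular_det (G1 R) k = Sigma k.
Proof.
apply: (@finish R (G1 R) (@nat_of_ord 2) (@nat_of_ord 2) val_inj val_inj src1 tgt1 len1 bonds1).
- by [].
- by move=> e; rewrite /= /tgt1; case: (nat_of_ord e == 0%nat).
- by move=> e; rewrite /= /len1; case: (nat_of_ord e == 0%nat).
- have -> : enum (bond (G1 R)) = prod_enum 'I_2 bool by rewrite enumT unlock.
  rewrite /prod_enum /bonds1 -val_enum_ord.
  elim: (enum (ordinal 2)) => //= a l IH.
  by rewrite map_cat IH enumT unlock.
- by vm_compute.
- by vm_compute.
Qed.

Lemma G2_ok (R : realType) (k : R) : secular_det (G2 R) k = Sigma k.
Proof.
apply: (@finish R (G2 R) (@nat_of_ord 5) (@nat_of_ord 5) val_inj val_inj src2 tgt2 len2 bonds2).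
- by move=> e; rewrite /= /G2_src /src2; case: ifP => _; rewrite inordK.
- by move=> e; rewrite /= /G2_tgt /tgt2; case: ifP => _; rewrite ?inordK.
- by [].
- have -> : enum (bond (G2 R)) = prod_enum 'I_5 bool by rewrite enumT unlock.
  rewrite /prod_enum /bonds2 -val_enum_ord.
  elim: (enum (ordinal 5)) => //= a l IH.
  by rewrite map_cat IH enumT unlock.
- by vm_compute.
- by vm_compute.
Qed.

Theorem mainTheorem2 (R : realType) :
  (forall k : R, secular_det (G1 R) k = Sigma k) /\
  (forall k : R, secular_det (G2 R) k = Sigma k).
Proof. by split; [exact: G1_ok | exact: G2_ok]. Qed.
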